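(* Let $X$ be a real normed vector space, $Y$ a $\mathbb{Q}$-vector space, $f:X\to Y$, $s\ge1$, $\varepsilon>0$, and $B=\{x\in X:\|x\|_X<\varepsilon\}$. If $\Delta_h^sf(x)=0$ for all $x\in X$ and all $h\in B$, then $\Delta_{h_1h_2\cdots h_s}f(x)=0$ for all $(x,h_1,\dots,h_s)\in X^{s+1}$.
   Context: For $h\in X$, $\Delta_hf(x)=f(x+h)-f(x)$; $\Delta_{h_1h_2\cdots h_s}f(x)=\Delta_{h_1}\left(\Delta_{h_2\cdots h_s}f\right)(x)$ for $s\ge 2$; and $\Delta_h^sf(x)=\sum_{k=0}^s\binom{s}{k}(-1)^{s-k}f(x+kh)$. *)

(* Defs.v *)
From HB Require Import structures.
From mathcomp Require Import all_boot all_order all_algebra.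
Set Implicit Arguments. Unset Strict Implicit. Unset Printing Implicit Defensive.
Import Order.TTheory GRing.Theory Num.Theory.
Local Open Scope ring_scope.

Definition is_norm (R : numDomainType) (X : lmodType R) (nrm : X -> R) : Prop :=
  [/\ forall x, 0 <= nrm x,
      forall x, nrm x = 0 -> x = 0,
      forall (a : R) x, nrm (a *: x) = `|a| * nrm x
    & forall x y, nrm (x + y) <= nrm x + nrm y].

Definition Delta (X Y : zmodType) (h : X) (f : X -> Y) : X -> Y :=
  fun x => f (x + h) - f x.

Definition Deltas (X Y : zmodType) (hs : seq X) (f : X -> Y) : X -> Y :=
  foldr (fun h g => Delta h g) f hs.

Definition DeltaPow (X : zmodType) (Y : lmodType rat) (h : X) (s : nat)
    (f : X -> Y) : X -> Y :=
  fun x => \sum_(k < s.+1) (((-1 : rat) ^+ (s - k)) *: (f (x + h *+ k) *+ 'C(s, k))).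

(* Main.v *)
Require Import Defs.
From HB Require Import structures.
From mathcomp Require Import all_boot all_order all_algebra.
Import Order.TTheory GRing.Theory Num.Theory.
Local Open Scope ring_scope.
Set Implicit Arguments. Unset Strict Implicit.

Fixpoint Tfun (X Y : zmodType) (f : X -> Y) (k : nat) (L : seq (X * X)) (x a : X) : Y :=
  match L with
  | [::] => f (x + a *+ k)
  | p :: L' => Tfun f k L' x a - Tfun f k L' (x + p.1) (a + p.2)
  end.

Fixpoint Sfun (X : zmodType) (Y : lmodType rat) (f : X -> Y) (n : nat) (L : seq (X * X)) (x a : X) : Y :=
  match L with
  | [::] => DeltaPow a n f x
  | p :: L' => Sfun f n L' x a - Sfun f n L' (x + p.1) (a + p.2)
  end.

Lemma T_Deltas (X : zmodType) (Y : lmodType rat) (f : X -> Y) k L x a :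
  Tfun f k L x a = ((-1 : rat) ^+ size L) *:
     Deltas (map (fun p => p.1 + p.2 *+ k) L) f (x + a *+ k).
Proof.
elim: L x a => [|p L IH] x a /=; first by rewrite expr0 scale1r.
rewrite !IH /Delta.
have -> : x + p.1 + (a + p.2) *+ k = x + a *+ k + (p.1 + p.2 *+ k).
  by rewrite mulrnDl addrACA.
by rewrite exprS -scalerA scaleN1r scalerBr opprB.
Qed.

Lemma S_T (X : zmodType) (Y : lmodType rat) (f : X -> Y) n L x a :
  Sfun f n L x a = \sum_(k < n.+1) ((-1 : rat) ^+ (n - k)) *: (Tfun f k L x a *+ 'C(n, k)).
Proof.
elim: L x a => [|p L IH] x a //=.
rewrite !IH -sumrB; apply: eq_bigr => k _.
by rewrite -scalerBr -mulrnBl.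
Qed.

Lemma S_zero (R : numDomainType) (X : lmodType R) (nrm : X -> R) (Y : lmodType rat)
  (f : X -> Y) n (eps : R) :
  is_norm nrm ->
  (forall x h : X, nrm h < eps -> DeltaPow h n f x = 0) ->
  forall L x a d, (forall p, p \in L -> nrm p.2 <= d) ->
  nrm a + (size L)%:R * d < eps -> Sfun f n L x a = 0.
Proof.
move=> [n0 _ _ ntri] H; elim => [|p L IH] x a d HL /=.
  by rewrite mul0r addr0 => /H ->.
move=> Hs.
have Hp : nrm p.2 <= d by apply: HL; rewrite in_cons eqxx.
have HL' : forall q, q \in L -> nrm q.2 <= d.
  by move=> q Hq; apply: HL; rewrite in_cons Hq orbT.
have d0 : 0 <= d by apply: le_trans Hp.
rewrite (IH x a d HL') ?(IH (x + p.1) (a + p.2) d HL') ?subrr //.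
  apply: le_lt_trans Hs; rewrite mulrSr mulrDl mul1r addrA (addrAC (nrm a)) lerD2r.
  by apply: le_trans (ntri _ _) _; rewrite lerD2l.
apply: le_lt_trans Hs; rewrite mulrSr mulrDl mul1r addrA lerDl.
done.
Qed.

Lemma Deltas0 (X Y : zmodType) (vs : seq X) (g : X -> Y) :
  0 \in vs -> forall x, Deltas vs g x = 0.
Proof.
elim: vs => [|v vs IH] //=; rewrite in_cons => /orP [/eqP <-|H] x.
  by rewrite /Delta addr0 subrr.
by rewrite /Delta !IH // subrr.
Qed.

Fixpoint mkL (R : numFieldType) (X : lmodType R) (j : nat) (hs : seq X) : seq (X * X) :=
  match hs with
  | [::] => [::]
  | h :: hs' => (h, - ((j%:R : R)^-1) *: h) :: mkL j.+1 hs'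
  end.

Lemma mkL_size (R : numFieldType) (X : lmodType R) j (hs : seq X) :
  size (mkL j hs) = size hs.
Proof. by elim: hs j => [|h hs IH] j //=; rewrite IH. Qed.

Lemma mkL_0 (R : numFieldType) (X : lmodType R) j (hs : seq X) :
  map (fun p => p.1 + p.2 *+ 0) (mkL j hs) = hs.
Proof. by elim: hs j => [|h hs IH] j //=; rewrite IH mulr0n addr0. Qed.

Lemma mkL_zero (R : numFieldType) (X : lmodType R) (hs : seq X) j k :
  (0 < j)%N -> (j <= k < j + size hs)%N ->
  0 \in map (fun p => p.1 + p.2 *+ k) (mkL j hs).
Proof.
elim: hs j => [|h hs IH] j j0 /andP [jk kj] /=.
  by rewrite addn0 in kj; move: (leq_ltn_trans jk kj); rewrite ltnn.
rewrite in_cons; case: (ltngtP j k) jk => // [jk' _|<- _].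
  by rewrite IH ?orbT //= jk' /=; rewrite addSnnS.
rewrite scalerMnl mulNrn -(mulr_natr (j%:R : R)^-1 j) mulVf ?pnatr_eq0 -?lt0n //.
by rewrite scaleN1r subrr eqxx.
Qed.

Lemma mkL_small (R : numFieldType) (X : lmodType R) (nrm : X -> R) (hs : seq X) j d :
  is_norm nrm -> (0 < j)%N -> (forall h, h \in hs -> nrm h < d) ->
  forall p, p \in mkL j hs -> nrm p.2 <= d.
Proof.
move=> [n0 _ nsc _]; elim: hs j => [|h hs IH] j j0 Hh p //=.
rewrite in_cons => /orP [/eqP -> /=|Hp].
  rewrite nsc normrN normfV normr_nat.
  apply: le_trans (ltW (Hh h _)); last by rewrite in_cons eqxx.
  apply: ler_piMl => //; rewrite invf_le1 ?ltr0n // ler1n //.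
apply: (IH j.+1) => // h' H'; apply: Hh; by rewrite in_cons H' orbT.
Qed.

Lemma local_thm (R : numFieldType) (X : lmodType R) (nrm : X -> R)
    (Y : lmodType rat) (f : X -> Y) (s : nat) (eps : R) :
  is_norm nrm -> 0 < eps ->
  (forall x h : X, nrm h < eps -> DeltaPow h s f x = 0) ->
  forall (x : X) (hs : seq X), size hs = s ->
  (forall h, h \in hs -> nrm h < eps / (s.+1)%:R) -> Deltas hs f x = 0.
Proof.
move=> Hn e0 H x hs Hsz Hsm.
have Hn' := Hn; case: Hn' => n0 nz nsc _.
have nrm0 : nrm 0 = 0 by rewrite -(scale0r (0 : X)) nsc normr0 mul0r.
have := S_T f s (mkL 1 hs) x 0.
have -> : Sfun f s (mkL 1 hs) x 0 = 0.
  apply: (@S_zero _ _ _ _ f s eps Hn H _ x 0 (eps / (s.+1)%:R)); first last.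
  rewrite nrm0 add0r mkL_size Hsz mulrCA gtr_pMr // ltr_pdivrMr ?ltr0n //.
  by rewrite mul1r ltr_nat.
  exact: mkL_small.
rewrite big_ord_recl big1 ?addr0; last first.
  move=> i _; rewrite T_Deltas Deltas0 ?scaler0 ?mul0rn ?scaler0 //.
  by apply: mkL_zero => //; rewrite lift0 /= Hsz add1n ltnS.
rewrite T_Deltas mkL_0 mulr0n addr0 mkL_size Hsz subn0 bin0 mulr1n scalerA.
by rewrite -exprMn mulrNN mulr1 expr1n scale1r => ->.
Qed.

Lemma Deltas_cat (X Y : zmodType) (hs1 hs2 : seq X) (g : X -> Y) :
  Deltas (hs1 ++ hs2) g = Deltas hs1 (Deltas hs2 g).
Proof. by rewrite /Deltas foldr_cat. Qed.

Lemma Deltas_ext (X Y : zmodType) (hs : seq X) (g1 g2 : X -> Y) :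
  (forall y, g1 y = g2 y) -> forall x, Deltas hs g1 x = Deltas hs g2 x.
Proof. by move=> H; elim: hs => [|h hs IH] x //=; rewrite /Delta !IH. Qed.

Lemma Deltas_add (X Y : zmodType) (hs : seq X) (g1 g2 : X -> Y) x :
  Deltas hs (fun y => g1 y + g2 y) x = Deltas hs g1 x + Deltas hs g2 x.
Proof.
elim: hs x => [|h hs IH] x //=; rewrite /Delta !IH.
by rewrite opprD addrACA.
Qed.

Lemma Deltas_shift (X Y : zmodType) (hs : seq X) (g : X -> Y) b x :
  Deltas hs (fun y => g (y + b)) x = Deltas hs g (x + b).
Proof. by elim: hs x => [|h hs IH] x //=; rewrite /Delta !IH addrAC. Qed.

Lemma Deltas_split (X Y : zmodType) (hs1 hs2 : seq X) a b (g : X -> Y) x :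
  Deltas (hs1 ++ (a + b) :: hs2) g x =
  Deltas (hs1 ++ a :: hs2) g (x + b) + Deltas (hs1 ++ b :: hs2) g x.
Proof.
rewrite !Deltas_cat /=.
rewrite (Deltas_ext _ (g2 := fun y => Delta a (Deltas hs2 g) (y + b)
                                   + Delta b (Deltas hs2 g) y)).
  by rewrite Deltas_add Deltas_shift.
move=> y; rewrite /Delta addrA (addrC y b) addrA.
by rewrite (addrC b y) subrK addrAC.
Qed.

Lemma Deltas_scale (X Y : zmodType) (hs1 hs2 : seq X) u (g : X -> Y) :
  (forall x, Deltas (hs1 ++ u :: hs2) g x = 0) ->
  forall N x, Deltas (hs1 ++ u *+ N :: hs2) g x = 0.
Proof.
move=> H; elim => [|N IH] x.
  by rewrite mulr0n Deltas0 // mem_cat in_cons eqxx orbT.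
by rewrite mulrS Deltas_split H IH addr0.
Qed.

Unset Implicit Arguments. Set Strict Implicit.

Theorem theorem5 (R : archiRealFieldType) (X : lmodType R) (nrm : X -> R)
    (Y : lmodType rat) (f : X -> Y) (s : nat) (eps : R) :
  is_norm nrm -> (1 <= s)%N -> 0 < eps ->
  (forall x h : X, nrm h < eps -> DeltaPow h s f x = 0) ->
  forall (x : X) (hs : seq X), size hs = s -> Deltas hs f x = 0.
Proof.
move=> Hn s1 e0 H x hs Hsz.
have Hn' := Hn; case: Hn' => n0 nz nsc _.
set del := eps / (s.+1)%:R.
have d0 : 0 < del by rewrite divr_gt0 ?ltr0n.
suff G : forall hs1 hs2, size (hs1 ++ hs2) = s ->
    (forall h, h \in hs2 -> nrm h < del) -> forall x, Deltas (hs1 ++ hs2) f x = 0.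
  by rewrite -(cats0 hs); apply: G => //; rewrite cats0.
elim/last_ind => [|p h IH] hs2 Hs Hsm y.
  exact: (local_thm Hn e0 H).
rewrite cat_rcons.
pose N := (Num.Def.archi_bound (nrm h / del)).+1.
have N0 : (N%:R : R) != 0 by rewrite pnatr_eq0.
have -> : h = ((N%:R : R)^-1 *: h) *+ N.
  by rewrite scalerMnl -mulr_natr mulVf // scale1r.
apply: Deltas_scale => z; apply: IH.
- by move: Hs; rewrite cat_rcons !size_cat /=.
- move=> h'; rewrite in_cons => /orP [/eqP ->|]; last exact: Hsm.
  rewrite nsc normfV normr_nat mulrC ltr_pdivrMr ?ltr0n //.
  rewrite -ltr_pdivrMl // mulrC.
  have hb := archi_boundP (divr_ge0 (n0 h) (ltW d0)).
  apply: (lt_le_trans hb); rewrite ler_nat /N; exact: leqnSn.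
Qed.
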